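(* For every constant $\alpha>0$ there is a constant $\beta>0$ depending only on $\alpha$ such that the following holds. Let $k \in \mathbb{Z}_+$, $\varepsilon \in (0, 1)$, let $X \subset \mathbb{R}^d$ be a finite data set with $|X|=n$, let $p\in\{1,\dots,n\}$, let $\mathcal{L}$ be a finite collection of lines in $\mathbb{R}^d$, and let $s>0$ and $t_l>0$ for $l\in\mathcal{L}$. Suppose (i) $X$ is partitioned into sets $\{X_l : l \in \mathcal{L}\}$ with $X_l \subseteq l$ for each $l \in \mathcal{L}$, and (ii) for each $l \in \mathcal{L}$, $X_l$ is partitioned into a family $\mathcal{Y}_l$ of sub-intervals (sets of points of $X_l$ that are consecutive in the order along $l$, with pairwise disjoint segments $I(Y)$), such that every $Y \in \mathcal{Y}_l$ satisfies $\mathrm{len}(I(Y)) \leq \alpha\frac{\varepsilon}{p} s$ or $\delta(Y) \leq \alpha\frac{\varepsilon}{k} t_l$. Let $D$ be the multiset consisting of $\mu(Y)$ with multiplicity $|Y|$ for each $Y\in\mathcal{Y}_l$, $l\in\mathcal{L}$. Then for every set $C\subset \mathbb{R}^d$ of $k$ centers, $|\mathrm{cost}_p(D, C) - \mathrm{cost}_p(X, C)| \leq \beta\,\varepsilon \,\big(s + \sum_{l \in \mathcal{L}} t_l\big)$.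
   Context: Distances are Euclidean and $d(x,C):=\min_{c\in C}d(x,c)$. For a finite multiset $Y$ and finite nonempty $C$, $\mathrm{cost}_p(Y,C)$ is the sum of the $p$ largest values of $d(y,C)$, $y\in Y$ (with multiplicity). For a finite set $Y$ of points on a line, $I(Y)$ is the smallest closed segment containing $Y$, $\mathrm{len}(I(Y))$ its length, $\mu(Y):=\frac{1}{|Y|}\sum_{y\in Y}y$ its mean, and $\delta(Y):=\sum_{y\in Y}d(y,\mu(Y))$ its cumulative error. *)

(* Defs.v *)
From HB Require Import structures.
From mathcomp Require Import all_boot all_order all_algebra.
From mathcomp Require Import reals.
Set Implicit Arguments. Unset Strict Implicit. Unset Printing Implicit Defensive.
Import Order.TTheory GRing.Theory Num.Theory.
Local Open Scope ring_scope.

Section Defs.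
Variables (R : realType) (d : nat).
Local Notation pt := 'rV[R]_d.

Definition edist (x y : pt) : R :=
  Num.sqrt (\sum_(i < d) (x ord0 i - y ord0 i) ^+ 2).

Definition dist_set (x : pt) (C : seq pt) : R :=
  match C with
  | [::] => 0
  | c0 :: cs => foldr Num.min (edist x c0) [seq edist x c | c <- cs]
  end.

Definition topsum (p : nat) (s : seq R) : R :=
  \sum_(i < p) nth 0 (sort (fun a b : R => b <= a) s) i.

Definition cost (p : nat) (Y : seq pt) (C : seq pt) : R :=
  topsum p [seq dist_set y C | y <- Y].

Definition on_line (a v z : pt) : Prop := exists t : R, z = a + t *: v.

Variable (n : nat) (X : 'I_n -> pt).

Definition mean (Y : {set 'I_n}) : pt :=
  (#|Y|%:R)^-1 *: \sum_(i in Y) X i.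

Definition cum_err (Y : {set 'I_n}) : R :=
  \sum_(i in Y) edist (X i) (mean Y).

(* I(Y): the smallest closed segment containing Y (Y collinear), i.e. the
   union of the segments [y1, y2] with y1, y2 in Y *)
Definition in_hull (Y : {set 'I_n}) (z : pt) : Prop :=
  exists i1 i2 : 'I_n, [/\ i1 \in Y, i2 \in Y &
    exists2 t : R, 0 <= t <= 1 & z = (1 - t) *: X i1 + t *: X i2].

(* len(I(Y)): length of the smallest segment containing the collinear set Y,
   i.e. the largest distance between two of its points *)
Definition seg_len (Y : {set 'I_n}) : R :=
  \big[Num.max/0]_(i in Y) \big[Num.max/0]_(j in Y) edist (X i) (X j).

End Defs.

(* Main.v *)
Require Import Defs.
From HB Require Import structures.
From mathcomp Require Import all_boot all_order all_algebra.
From mathcomp Require Import reals.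
From mathcomp Require Import ring lra.
Import Order.TTheory GRing.Theory Num.Theory.
Local Open Scope ring_scope.

Module Aux.
Set Implicit Arguments. Unset Strict Implicit. Unset Printing Implicit Defensive.

Section Geo.
Variables (R : realType) (d : nat).
Local Notation pt := 'rV[R]_d.

Definition dot (u w : pt) : R := \sum_(i < d) u ord0 i * w ord0 i.

Lemma dotC u w : dot u w = dot w u.
Proof. by apply: eq_bigr => i _; rewrite mulrC. Qed.
Lemma dotDl u1 u2 w : dot (u1 + u2) w = dot u1 w + dot u2 w.
Proof. by rewrite /dot -big_split; apply: eq_bigr => i _; rewrite !mxE mulrDl. Qed.
Lemma dotBl u1 u2 w : dot (u1 - u2) w = dot u1 w - dot u2 w.
Proof. by rewrite /dot -sumrB; apply: eq_bigr => i _; rewrite !mxE mulrBl. Qed.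
Lemma dotZl (c : R) u w : dot (c *: u) w = c * dot u w.
Proof. by rewrite /dot mulr_sumr; apply: eq_bigr => i _; rewrite !mxE mulrA. Qed.
Lemma dotDr u w1 w2 : dot u (w1 + w2) = dot u w1 + dot u w2.
Proof. by rewrite dotC dotDl !(dotC u). Qed.
Lemma dotBr u w1 w2 : dot u (w1 - w2) = dot u w1 - dot u w2.
Proof. by rewrite dotC dotBl !(dotC u). Qed.
Lemma dotZr (c : R) u w : dot u (c *: w) = c * dot u w.
Proof. by rewrite dotC dotZl dotC. Qed.
Lemma dot_ge0 u : 0 <= dot u u.
Proof. by apply: sumr_ge0 => i _; rewrite -expr2 sqr_ge0. Qed.
Definition nrm (u : pt) : R := Num.sqrt (dot u u).

Lemma edist_nrm (x y : pt) : edist x y = nrm (x - y).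
Proof. by rewrite /edist /nrm /dot; congr Num.sqrt; apply: eq_bigr => i _; rewrite !mxE expr2. Qed.

Lemma CS u w : dot u w ^+ 2 <= dot u u * dot w w.
Proof.
have [W0|Wn0] := eqVneq (dot w w) 0.
  have wi : forall i, w ord0 i = 0.
    move=> i.
    have H : forall j : 'I_d, xpredT j -> 0 <= w ord0 j * w ord0 j.
      by move=> j _; rewrite -expr2 sqr_ge0.
    have := @psumr_eq0P _ _ xpredT (fun j => w ord0 j * w ord0 j) H W0 i isT.
    move=> /= /eqP; rewrite mulf_eq0 orbb; by move/eqP.
  have -> : dot u w = 0 by rewrite /dot big1 // => i _; rewrite wi mulr0.
  by rewrite expr2 mulr0 W0 mulr0.
have Wp : 0 < dot w w by rewrite lt_def Wn0 dot_ge0.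
set W := dot w w in Wn0 Wp *.
have h := dot_ge0 (u - (dot u w / W) *: w).
rewrite dotBl !dotBr !dotZl !dotZr (dotC w u) -/W in h.
set l := dot u w / W in h.
have lW : l * W = dot u w by rewrite /l mulfVK.
nra.
Qed.

Lemma nrm_ge0 u : 0 <= nrm u.
Proof. exact: sqrtr_ge0. Qed.

Lemma nrm_sq u : nrm u ^+ 2 = dot u u.
Proof. by rewrite /nrm sqr_sqrtr // dot_ge0. Qed.

Lemma dot_le_nrm u w : dot u w <= nrm u * nrm w.
Proof.
have h := CS u w.
have := nrm_ge0 u; have := nrm_ge0 w.
rewrite -!nrm_sq in h.
move=> h1 h2.
have: `|dot u w| <= nrm u * nrm w.
  rewrite -ler_sqr ?nnegrE ?normr_ge0 ?mulr_ge0 //.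
  by rewrite real_normK ?num_real // exprMn.
by move=> /(le_trans (ler_norm _)).
Qed.

Lemma nrm_tri u w : nrm (u + w) <= nrm u + nrm w.
Proof.
rewrite -ler_sqr ?nnegrE ?addr_ge0 ?nrm_ge0 //.
rewrite nrm_sq dotDl !dotDr (dotC w u) sqrrD !nrm_sq.
have := dot_le_nrm u w; lra.
Qed.

Lemma edistC (x y : pt) : edist x y = edist y x.
Proof. rewrite !edist_nrm /nrm -opprB -scaleN1r dotZl dotZr mulrA. by rewrite mulrNN !mul1r. Qed.

Lemma edist_tri (x y z : pt) : edist x z <= edist x y + edist y z.
Proof. by rewrite !edist_nrm; have := nrm_tri (x - y) (y - z); rewrite addrA subrK. Qed.

Lemma edist_ge0 (x y : pt) : 0 <= edist x y.
Proof. by rewrite edist_nrm nrm_ge0. Qed.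


Lemma foldr_min_le (e : R) (l : seq R) : foldr Num.min e l <= e /\ forall x, x \in l -> foldr Num.min e l <= x.
Proof.
elim: l => [|y l [IH1 IH2]] /=; first by split.
split; first by rewrite ge_min IH1 orbT.
move=> x; rewrite inE => /orP [/eqP->|xl]; first by rewrite ge_min lexx.
by rewrite ge_min IH2 ?orbT.
Qed.

Lemma foldr_min_mem (e : R) (l : seq R) : foldr Num.min e l = e \/ foldr Num.min e l \in l.
Proof.
elim: l => [|y l IH] /=; first by left.
rewrite /Num.min; case: ifP => _; first by right; rewrite mem_head.
by case: IH => [->|H]; [left|right; rewrite inE H orbT].
Qed.

Lemma DS1 (z c : pt) (C : seq pt) : c \in C -> dist_set z C <= edist z c.
Proof.
case: C => [//|c0 cs] /=.
have [H1 H2] := foldr_min_le (edist z c0) [seq edist z c | c <- cs].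
rewrite inE => /orP [/eqP->//|cin].
by apply: H2; apply: map_f.
Qed.

Lemma DS2 (z : pt) (C : seq pt) : C != [::] -> exists2 c, c \in C & dist_set z C = edist z c.
Proof.
case: C => [//|c0 cs] _ /=.
case: (foldr_min_mem (edist z c0) [seq edist z c | c <- cs]) => [->|].
  by exists c0; rewrite ?mem_head.
move=> /mapP [c cin ->]; exists c => //; by rewrite inE cin orbT.
Qed.

Lemma DS_ge0 (z : pt) (C : seq pt) : 0 <= dist_set z C.
Proof.
case: C => [//|c0 cs]; have [c cin ->] := DS2 z (isT : c0 :: cs != [::]).
exact: edist_ge0.
Qed.

Lemma DS_lip (x y : pt) (C : seq pt) : `|dist_set x C - dist_set y C| <= edist x y.
Proof.
case: C => [|c0 cs]; first by rewrite /= subrr normr0 edist_ge0.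
set C := c0 :: cs.
have [cx cxin ex] := DS2 x (isT : C != [::]).
have [cy cyin ey] := DS2 y (isT : C != [::]).
have h1 := DS1 x cyin; have h2 := DS1 y cxin.
have t1 := edist_tri x y cy; have t2 := edist_tri y x cx.
rewrite (edistC y x) in t2.
rewrite ler_norml; apply/andP; split; lra.
Qed.


Section Line.
Variables (a v c : pt).
Definition lw := a - c.
Local Notation w := lw.
Definition lV := dot v v.
Definition lb := dot w v.
Definition lW := dot w w.
Definition lq (t : R) := lV * t ^+ 2 + 2 * lb * t + lW.
Definition phi (t : R) := edist (a + t *: v) c.
Definition psi (t : R) := (lb + t * lV) / phi t.

Lemma lqE t : dot (a + t *: v - c) (a + t *: v - c) = lq t.
Proof.
have -> : a + t *: v - c = w + t *: v by rewrite /lw addrAC.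
rewrite dotDl 2!dotDr !dotZl !dotZr (dotC v w) /lq /lV /lb /lW; ring.
Qed.

Lemma lq_ge0 t : 0 <= lq t.
Proof. by rewrite -lqE dot_ge0. Qed.

Lemma phi_ge0 t : 0 <= phi t.
Proof. exact: edist_ge0. Qed.

Lemma phi_sq t : phi t ^+ 2 = lq t.
Proof. by rewrite /phi edist_nrm nrm_sq lqE. Qed.

Lemma lCS : lb ^+ 2 <= lV * lW.
Proof. by rewrite /lb /lV /lW mulrC; apply: CS. Qed.

Lemma tangent t t' : phi t + psi t * (t' - t) <= phi t'.
Proof.
have [P0|Pn0] := eqVneq (phi t) 0.
  by rewrite /psi P0 invr0 mulr0 mul0r addr0 phi_ge0.
have Pp : 0 < phi t by rewrite lt_def Pn0 phi_ge0.
set P := phi t in Pn0 Pp *; set P' := phi t'.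
have hP' : 0 <= P' by apply: phi_ge0.
have sq1 : P ^+ 2 = lq t by apply: phi_sq.
have sq2 : P' ^+ 2 = lq t' by apply: phi_sq.
have cs := lCS.
set cross := lV * t * t' + lb * (t + t') + lW.
have id1 : lq t * lq t' - cross ^+ 2 = (lV * lW - lb ^+ 2) * (t - t') ^+ 2 by rewrite /lq /cross; ring.
have h1 : cross ^+ 2 <= (P * P') ^+ 2.
  rewrite exprMn sq1 sq2 -subr_ge0 id1.
  by apply: mulr_ge0; rewrite ?subr_ge0 ?sqr_ge0.
have h2 : cross <= P * P'.
  have hPP : 0 <= P * P' by rewrite mulr_ge0 // ltW.
  move: h1 hPP; set X := P * P'; rewrite !expr2 => h1 hPP; nra.
have h3 : psi t * P = lb + t * lV by rewrite /psi -/P mulfVK.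
have h4 : P * (P + psi t * (t' - t)) = cross.
  have e : P * (psi t * (t' - t)) = (psi t * P) * (t' - t) by ring.
  by rewrite mulrDr e h3 -expr2 sq1 /lq /cross; ring.
rewrite -(ler_pM2l Pp) h4 //.
Qed.

Lemma psi_mono t1 t2 : t1 <= t2 -> psi t1 <= psi t2.
Proof.
rewrite le_eqVlt => /orP [/eqP->//|lt12].
have h1 := tangent t1 t2; have h2 := tangent t2 t1.
have : 0 <= (psi t2 - psi t1) * (t2 - t1) by lra.
by rewrite pmulr_lge0 ?subr_gt0 // subr_ge0.
Qed.

Lemma psi_bound t : `|psi t| <= nrm v.
Proof.
have [P0|Pn0] := eqVneq (phi t) 0.
  by rewrite /psi P0 invr0 mulr0 normr0 nrm_ge0.
have Pp : 0 < phi t by rewrite lt_def Pn0 phi_ge0.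
rewrite /psi normrM normfV (gtr0_norm Pp) ler_pdivrMr //.
rewrite -ler_sqr ?nnegrE ?normr_ge0 ?mulr_ge0 ?nrm_ge0 //.
rewrite real_normK ?num_real // exprMn nrm_sq phi_sq -/lV /lq.
  have := lCS; nra.
exact: phi_ge0.
Qed.

Definition sig (th t : R) := if th < phi t then psi t else 0.
Definition Fp (th t : R) := Num.max (phi t - th) 0.

Lemma Fp_ge (th t : R) : phi t - th <= Fp th t /\ 0 <= Fp th t.
Proof. by rewrite /Fp !le_max !lexx orbT. Qed.

Lemma PL th t t' : Fp th t - Fp th t' <= sig th t * (t - t').
Proof.
have [h1 h2] := Fp_ge th t'.
rewrite /sig; case: ifP => H.
  have -> : Fp th t = phi t - th by rewrite /Fp; apply/max_idPl; rewrite subr_ge0 ltW.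
  have := tangent t t'; lra.
have -> : Fp th t = 0 by rewrite /Fp; apply/max_idPr; rewrite subr_le0 leNgt H.
lra.
Qed.

Lemma sig_mono th t1 t2 : t1 <= t2 -> sig th t1 <= sig th t2.
Proof.
move=> le12; rewrite /sig.
have T12 := tangent t1 t2; have T21 := tangent t2 t1.
case: ifP => H1; case: ifP => H2.
- exact: psi_mono.
- have : ~~ (0 < psi t1).
    apply/negP => ps; move/negbT: H2; rewrite -leNgt => H2.
    have : 0 <= psi t1 * (t2 - t1) by apply: mulr_ge0; [exact: ltW | rewrite subr_ge0].
    lra.
  by rewrite -leNgt.
- have : ~~ (psi t2 < 0).
    apply/negP => ps; move/negbT: H1; rewrite -leNgt => H1.
    have : 0 <= psi t2 * (t1 - t2) by apply: mulr_le0; [exact: ltW | rewrite subr_le0].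
    lra.
  by rewrite -leNgt.
- by [].
Qed.

Lemma sig_bound th t : `|sig th t| <= nrm v.
Proof. by rewrite /sig; case: ifP => _; rewrite ?psi_bound ?normr0 ?nrm_ge0. Qed.

End Line.


Lemma closer_iff (a v c c' : pt) t : (phi a v c t <= phi a v c' t) = (lq a v c t <= lq a v c' t).
Proof. by rewrite -ler_sqr ?nnegrE ?phi_ge0 // !phi_sq. Qed.

Lemma lq_diff (a v c c' : pt) t :
  lq a v c t - lq a v c' t = 2 * (lb a v c - lb a v c') * t + (lW a c - lW a c').
Proof. rewrite /lq; ring. Qed.

Lemma closer_lin (a v c c' : pt) t : (phi a v c t <= phi a v c' t) =
  (2 * (lb a v c - lb a v c') * t + (lW a c - lW a c') <= 0).
Proof. by rewrite closer_iff -subr_le0 lq_diff. Qed.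

Lemma closer_between (a v c c' : pt) t1 t2 t : t1 <= t -> t <= t2 ->
  phi a v c t1 <= phi a v c' t1 -> phi a v c t2 <= phi a v c' t2 -> phi a v c t <= phi a v c' t.
Proof.
rewrite !closer_lin.
set A := 2 * _; set B := lW a c - lW a c'.
clearbody A B.
move=> h1 h2 h3 h4.
have [A0|A0] := leP 0 A.
  have : A * t <= A * t2 by rewrite ler_wpM2l.
  lra.
have : A * t <= A * t1 by rewrite ler_wnM2l // ltW.
lra.
Qed.

Lemma closer_avg (a v c c' : pt) (I : finType) (Y : {set I}) (tt : I -> R) :
  (0 < #|Y|)%N -> (forall i, i \in Y -> phi a v c (tt i) <= phi a v c' (tt i)) ->
  phi a v c (#|Y|%:R^-1 * \sum_(i in Y) tt i) <= phi a v c' (#|Y|%:R^-1 * \sum_(i in Y) tt i).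
Proof.
move=> Y0 H.
rewrite closer_lin.
have h : \sum_(i in Y) (2 * (lb a v c - lb a v c') * tt i + (lW a c - lW a c')) <= 0.
  apply: sumr_le0 => i iY; have := H i iY; by rewrite closer_lin.
set A := 2 * _ in h *; set B := lW a c - lW a c' in h *.
clearbody A B.
rewrite big_split /= sumr_const -mulr_sumr in h.
have N0 : (0 < #|Y|%:R :> R) by rewrite ltr0n.
have -> : A * (#|Y|%:R^-1 * \sum_(i in Y) tt i) + B = #|Y|%:R^-1 * (A * \sum_(i in Y) tt i + B *+ #|Y|).
  rewrite -mulr_natr; field; by rewrite gt_eqF.
by rewrite pmulr_rle0 ?invr_gt0.
Qed.

Lemma line_dist (a v : pt) t t' : edist (a + t *: v) (a + t' *: v) = `|t - t'| * nrm v.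
Proof.
rewrite edist_nrm.
have -> : a + t *: v - (a + t' *: v) = (t - t') *: v by rewrite opprD addrACA subrr add0r scalerBl.
by rewrite /nrm dotZl dotZr mulrA -expr2 sqrtrM ?sqr_ge0 // sqrtr_sqr.
Qed.

Lemma mean_line n (X : 'I_n -> pt) (Y : {set 'I_n}) (a v : pt) (tt : 'I_n -> R) :
  (0 < #|Y|)%N -> (forall i, i \in Y -> X i = a + tt i *: v) ->
  mean X Y = a + (#|Y|%:R^-1 * \sum_(i in Y) tt i) *: v.
Proof.
move=> Y0 H; rewrite /mean (eq_bigr (fun i => a + tt i *: v)) //.
rewrite big_split /= sumr_const -scaler_suml scalerDr scalerA -scaler_nat scalerA.
by rewrite mulVf ?scale1r // pnatr_eq0 -lt0n.
Qed.

End Geo.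
Section Top.
Variables (R : realType) (n p : nat).
Hypothesis (pn : (p <= n)%N).

Definition TS (a : 'I_n -> R) := topsum p [seq a j | j <- enum 'I_n].

Let ge := fun x y : R => y <= x.
Lemma ge_total : total ge. Proof. by move=> x y; rewrite /ge le_total. Qed.
Lemma ge_trans : transitive ge. Proof. by move=> x y z /= h1 h2; rewrite /ge (le_trans h2 h1). Qed.

Lemma sum_sortE (a : 'I_n -> R) (F : R -> R) :
  \sum_(j < n) F (a j) = \sum_(0 <= i < n) F (nth 0 (sort ge [seq a j | j <- enum 'I_n]) i).
Proof.
set s := sort ge _.
have ss : size s = n by rewrite size_sort size_map size_enum_ord.
rewrite [in RHS](_ : n = size s) // -(big_nth 0 (r := s) xpredT F).
rewrite (perm_big [seq a j | j <- enum 'I_n]); last by rewrite perm_sort.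
by rewrite big_map big_enum.
Qed.

Lemma P1a (a : 'I_n -> R) th : TS a <= p%:R * th + \sum_(j < n) Num.max (a j - th) 0.
Proof.
rewrite /TS /topsum (sum_sortE a (fun x => Num.max (x - th) 0)).
set s := sort ge _.
rewrite (big_cat_nat (leq0n p) pn) /= -(big_mkord xpredT (fun i => nth 0 s i)).
have -> : p%:R * th = \sum_(0 <= i < p) th by rewrite sumr_const_nat subn0 mulr_natl.
rewrite addrA -big_split /=.
have h2 : 0 <= \sum_(p <= i < n) Num.max (nth 0 s i - th) 0 by apply: sumr_ge0 => i _; rewrite le_max lexx orbT.
suff : \sum_(0 <= i < p) nth 0 s i <= \sum_(0 <= i < p) (th + Num.max (nth 0 s i - th) 0) by lra.
apply: ler_sum => i _; rewrite -lerBlDl le_max lexx //.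
Qed.

Lemma P1b (a : 'I_n -> R) : (0 < p)%N -> exists th, TS a = p%:R * th + \sum_(j < n) Num.max (a j - th) 0.
Proof.
move=> p0.
exists (nth 0 (sort ge [seq a j | j <- enum 'I_n]) p.-1).
rewrite /TS /topsum (sum_sortE a (fun x => Num.max (x - _) 0)).
set s := sort ge _; set th := nth 0 s p.-1.
have ss : size s = n by rewrite size_sort size_map size_enum_ord.
have srt : sorted ge s by apply: sort_sorted; exact: ge_total.
have mono : forall i j, (i <= j)%N -> (j < n)%N -> nth 0 s j <= nth 0 s i.
  move=> i j ij jn.
  have refl : reflexive ge by move=> x; rewrite /ge lexx.
  apply: (sorted_leq_nth ge_trans refl 0 srt) => //.
    by rewrite inE ss (leq_ltn_trans ij jn).
  by rewrite inE ss.
rewrite (big_cat_nat (leq0n p) pn) /= -(big_mkord xpredT (fun i => nth 0 s i)).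
have -> : \sum_(p <= i < n) Num.max (nth 0 s i - th) 0 = 0.
  rewrite big_nat big1 // => i /andP [pi in_].
  have := mono p.-1 i; rewrite (leq_trans _ pi) ?leq_pred // => /(_ isT in_) h.
  by apply/max_idPr; rewrite subr_le0.
have -> : p%:R * th = \sum_(0 <= i < p) th by rewrite sumr_const_nat subn0 mulr_natl.
rewrite addr0 -big_split /=; rewrite !big_nat; apply: eq_bigr => i /andP [_ ip].
have := mono i p.-1; rewrite -ltnS prednK // => /(_ ip pn) h.
have -> : Num.max (nth 0 s i - th) 0 = nth 0 s i - th by apply/max_idPl; rewrite subr_ge0.
by rewrite addrC subrK.
Qed.

Lemma TS_lip (a b : 'I_n -> R) (l : R) : (forall j, `|a j - b j| <= l) -> `|TS a - TS b| <= p%:R * l.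
Proof.
have key : forall a b : 'I_n -> R, (forall j, `|a j - b j| <= l) -> TS a - TS b <= p%:R * l.
  move=> a' b' H.
  case: (posnP p) => [p0|p0].
    by rewrite /TS /topsum p0 !big_ord0 subrr mul0r.
  have [th eb] := P1b b' p0.
  have := P1a a' (th + l); rewrite eb => h.
  suff : \sum_(j < n) Num.max (a' j - (th + l)) 0 <= \sum_(j < n) Num.max (b' j - th) 0.
    move: h; rewrite mulrDr; lra.
  apply: ler_sum => j _.
  have := H j; rewrite ler_norml => /andP [_ h2].
  rewrite ge_max; apply/andP; split.
    by rewrite le_max; apply/orP; left; lra.
  by rewrite le_max lexx orbT.
move=> H; rewrite ler_norml; apply/andP; split; last by apply: key.
rewrite lerNl opprB; apply: key => j; by rewrite distrC.
Qed.

End Top.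


Section Extra.
Variables (R : realType) (d : nat).
Local Notation pt := 'rV[R]_d.

Lemma dot0 (u : pt) : dot u u = 0 -> u = 0.
Proof.
move=> W0; apply/rowP => i; rewrite mxE.
have H : forall j : 'I_d, xpredT j -> 0 <= u ord0 j * u ord0 j.
  by move=> j _; rewrite -expr2 sqr_ge0.
have := @psumr_eq0P _ _ xpredT (fun j => u ord0 j * u ord0 j) H W0 i isT.
by move=> /= /eqP; rewrite mulf_eq0 orbb (_ : 0 = ord0) ?ord1 //; move/eqP.
Qed.

Lemma nrm_gt0 (u : pt) : u != 0 -> 0 < nrm u.
Proof.
move=> u0; rewrite /nrm sqrtr_gt0 lt_def dot_ge0 andbT.
by apply/negP => /eqP /dot0 /eqP; rewrite (negbTE u0).
Qed.

Lemma conv_line (a v : pt) (l x y : R) :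
  (1 - l) *: (a + x *: v) + l *: (a + y *: v) = a + ((1 - l) * x + l * y) *: v.
Proof. by apply/rowP => i; rewrite !mxE; ring. Qed.

Lemma maxdiff (x y th : R) : `|Num.max (x - th) 0 - Num.max (y - th) 0| <= `|x - y|.
Proof.
have h1 := ler_norm (x - y); have h2 := ler_norm (y - x); rewrite distrC in h2.
case: (lerP (x - th) 0) => hx; case: (lerP (y - th) 0) => hy;
  rewrite ler_norml; apply/andP; split; lra.
Qed.

End Extra.

Section Main.
Variables (R : realType) (alpha : R) (d k : nat) (eps : R) (n : nat) (X : 'I_n -> 'rV[R]_d) (p m : nat)
  (a v : 'I_m -> 'rV[R]_d) (s : R) (t : 'I_m -> R) (lab : 'I_n -> 'I_m) (grp : 'I_n -> nat)
  (C : seq 'rV[R]_d).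
Local Notation pt := 'rV[R]_d.
Hypotheses (halpha : 0 < alpha) (k0 : (0 < k)%N) (heps : 0 < eps < 1) (hp : (0 < p <= n)%N)
  (hv : forall i, v i != 0) (hs : 0 < s) (ht : forall i, 0 < t i)
  (hline : forall j, on_line (a (lab j)) (v (lab j)) (X j))
  (hgrp : forall j j', grp j = grp j' -> lab j = lab j')
  (hdisj : forall j j', grp j <> grp j' -> lab j = lab j' ->
       ~ (exists z, in_hull X [set i | grp i == grp j] z /\
                    in_hull X [set i | grp i == grp j'] z))
  (htype : forall j, seg_len X [set i | grp i == grp j] <= alpha * (eps / p%:R) * s
            \/ cum_err X [set i | grp i == grp j] <= alpha * (eps / k%:R) * t (lab j))
  (huniq : uniq C) (hsize : size C = k).

Definition Y j := [set i | grp i == grp j].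
Lemma hline' j : exists x : R, X j == a (lab j) + x *: v (lab j).
Proof. by case: (hline j) => x e; exists x; rewrite e. Qed.
Definition tt j : R := xchoose (hline' j).
Lemma Xt j : X j = a (lab j) + tt j *: v (lab j).
Proof. exact/eqP/(xchooseP (hline' j)). Qed.

Definition ell := alpha * (eps / p%:R) * s.
Definition tau l := alpha * (eps / k%:R) * t l.

Lemma inY i j : (i \in Y j) = (grp i == grp j).
Proof. by rewrite inE. Qed.
Lemma YE i j : i \in Y j -> Y i = Y j.
Proof. by rewrite inY => /eqP e; apply/setP => z; rewrite !inY e. Qed.
Lemma jY j : j \in Y j.
Proof. by rewrite inY. Qed.
Lemma Y0 j : (0 < #|Y j|)%N.
Proof. by apply/card_gt0P; exists j; rewrite jY. Qed.
Lemma YR0 j : (0 < #|Y j|%:R :> R).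
Proof. by rewrite ltr0n Y0. Qed.
Lemma labY i j : i \in Y j -> lab i = lab j.
Proof. by rewrite inY => /eqP /hgrp. Qed.
Lemma XtY i j : i \in Y j -> X i = a (lab j) + tt i *: v (lab j).
Proof. by move=> iY; rewrite Xt (labY iY). Qed.

Definition mu j := #|Y j|%:R^-1 * \sum_(i in Y j) tt i.
Lemma meanE j : mean X (Y j) = a (lab j) + mu j *: v (lab j).
Proof. by apply: mean_line; [exact: Y0 | move=> i; exact: XtY]. Qed.

Definition Lt j := foldr Num.min (tt j) [seq tt i | i <- enum (Y j)].
Definition Rt j := - foldr Num.min (- tt j) [seq - tt i | i <- enum (Y j)].

Lemma Lt_le i j : i \in Y j -> Lt j <= tt i.
Proof.
move=> iY; have [_ H] := foldr_min_le (tt j) [seq tt i | i <- enum (Y j)].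
by apply: H; apply: map_f; rewrite mem_enum.
Qed.
Lemma Rt_ge i j : i \in Y j -> tt i <= Rt j.
Proof.
move=> iY; have [_ H] := foldr_min_le (- tt j) [seq - tt i | i <- enum (Y j)].
by rewrite /Rt lerNr; apply: H; apply: (map_f (fun i => - tt i)); rewrite mem_enum.
Qed.
Lemma Lt_ex j : exists2 i, i \in Y j & Lt j = tt i.
Proof.
case: (foldr_min_mem (tt j) [seq tt i | i <- enum (Y j)]) => [E|].
  by exists j; rewrite ?jY.
by move=> /mapP [i]; rewrite mem_enum => iY E; exists i.
Qed.
Lemma Rt_ex j : exists2 i, i \in Y j & Rt j = tt i.
Proof.
case: (foldr_min_mem (- tt j) [seq - tt i | i <- enum (Y j)]) => [E|].
  by exists j; rewrite ?jY // /Rt E opprK.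
by move=> /mapP [i]; rewrite mem_enum => iY E; exists i; rewrite // /Rt E opprK.
Qed.
Lemma Lt_inv i j : i \in Y j -> Lt i = Lt j.
Proof.
move=> iY; have E := YE iY.
have [i1 i1Y e1] := Lt_ex i; have [j1 j1Y e2] := Lt_ex j.
apply: le_anti; rewrite e1 e2; apply/andP; split.
  by rewrite -e1; apply: Lt_le; rewrite E.
by rewrite -e2; apply: Lt_le; rewrite -E.
Qed.
Lemma Rt_inv i j : i \in Y j -> Rt i = Rt j.
Proof.
move=> iY; have E := YE iY.
have [i1 i1Y e1] := Rt_ex i; have [j1 j1Y e2] := Rt_ex j.
apply: le_anti; rewrite e1 e2; apply/andP; split.
  by rewrite -e2; apply: Rt_ge; rewrite -E.
by rewrite -e1; apply: Rt_ge; rewrite E.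
Qed.
Lemma LRt j : Lt j <= Rt j.
Proof. by apply: (le_trans (Lt_le (jY j))); apply: Rt_ge; apply: jY. Qed.

Lemma mu_bounds j : Lt j <= mu j /\ mu j <= Rt j.
Proof.
have N0 := YR0 j.
have h1 : Lt j *+ #|Y j| <= \sum_(i in Y j) tt i.
  by rewrite -sumr_const; apply: ler_sum => i iY; apply: Lt_le.
have h2 : \sum_(i in Y j) tt i <= Rt j *+ #|Y j|.
  by rewrite -sumr_const; apply: ler_sum => i iY; apply: Rt_ge.
rewrite -mulr_natr in h1; rewrite -mulr_natr in h2.
rewrite /mu; split.
  by rewrite mulrC ler_pdivlMr // mulrC.
by rewrite mulrC ler_pdivrMr.
Qed.

Lemma sum_dev j : \sum_(i in Y j) (tt i - mu j) = 0.
Proof.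
have N := YR0 j.
rewrite sumrB sumr_const /mu -mulr_natr; field.
by rewrite gt_eqF.
Qed.

Lemma nrmv l : 0 < nrm (v l).
Proof. exact: nrm_gt0. Qed.

Lemma cum_errE j : cum_err X (Y j) = \sum_(i in Y j) `|tt i - mu j| * nrm (v (lab j)).
Proof. by apply: eq_bigr => i iY; rewrite meanE (XtY iY) line_dist. Qed.

Lemma seg_len_ge j : (Rt j - Lt j) * nrm (v (lab j)) <= seg_len X (Y j).
Proof.
have [il ilY el] := Lt_ex j; have [ir irY er] := Rt_ex j.
have : edist (X il) (X ir) = (Rt j - Lt j) * nrm (v (lab j)).
  by rewrite (XtY ilY) (XtY irY) line_dist -el -er distrC ger0_norm // subr_ge0 LRt.
move=> <-; rewrite /seg_len.
pose G := fun i0 => \big[Num.max/0]_(j0 in Y j) edist (X i0) (X j0). have h := le_bigmax_cond 0 G ilY. apply: (le_trans _ h).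
exact: (le_bigmax_cond 0 (fun j0 => edist (X il) (X j0)) irY).
Qed.


Definition closestb (z c : pt) := all (fun c' => edist z c <= edist z c') C.

Lemma closest_ds z c : c \in C -> closestb z c -> dist_set z C = edist z c.
Proof.
move=> cC /allP cl; apply: le_anti; rewrite DS1 //=.
have CC : C != [::] by rewrite -size_eq0 hsize -lt0n.
have [c0 c0C ->] := DS2 z CC.
exact: cl.
Qed.

Lemma closest_ex z : has (closestb z) C.
Proof.
have CC : C != [::] by rewrite -size_eq0 hsize -lt0n.
have [c0 c0C e] := DS2 z CC.
apply/hasP; exists c0 => //; apply/allP => c' c'C; rewrite -e; exact: DS1.
Qed.

Definition nsP j := fun c => [forall i in Y j, closestb (X i) c].
Definition ns j := has (nsP j) C.
Definition cN j := nth 0 C (find (nsP j) C).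

Lemma cN_in j : ns j -> cN j \in C.
Proof. by move=> h; rewrite /cN mem_nth // -has_find. Qed.

Lemma cN_cl j : ns j -> forall i, i \in Y j -> closestb (X i) (cN j).
Proof. by move=> h i iY; have /forall_inP := nth_find 0 h; apply. Qed.

Lemma phiE l c x : edist (a l + x *: v l) c = phi (a l) (v l) c x.
Proof. by []. Qed.

Lemma cN_mean j : ns j -> closestb (mean X (Y j)) (cN j).
Proof.
move=> h; apply/allP => c' c'C; rewrite meanE !phiE.
apply: closer_avg; first exact: Y0.
move=> i iY; have /allP := cN_cl h iY; move=> /(_ c' c'C).
by rewrite (XtY iY) !phiE.
Qed.

Definition PR j := a (lab j) + Rt j *: v (lab j).
Definition cR j := nth 0 C (find (closestb (PR j)) C).
Lemma cR_in j : cR j \in C.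
Proof. by rewrite /cR mem_nth // -has_find closest_ex. Qed.
Lemma cR_cl j : closestb (PR j) (cR j).
Proof. exact: nth_find (closest_ex _). Qed.

Definition type1 j := seg_len X (Y j) <= ell.
Lemma type2 j : ~~ type1 j -> cum_err X (Y j) <= tau (lab j).
Proof. by rewrite /type1; case: (htype j) => // ->. Qed.

Lemma ns_inv i j : i \in Y j -> ns i = ns j.
Proof. by move=> iY; rewrite /ns /nsP (YE iY). Qed.
Lemma cN_inv i j : i \in Y j -> cN i = cN j.
Proof. by move=> iY; rewrite /cN /nsP (YE iY). Qed.
Lemma type1_inv i j : i \in Y j -> type1 i = type1 j.
Proof. by move=> iY; rewrite /type1 (YE iY). Qed.
Lemma mu_inv i j : i \in Y j -> mu i = mu j.
Proof. by move=> iY; rewrite /mu (YE iY). Qed.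

Definition f j := dist_set (X j) C.
Definition g j := dist_set (mean X (Y j)) C.
Lemma g_inv i j : i \in Y j -> g i = g j.
Proof. by move=> iY; rewrite /g (YE iY). Qed.

Definition Ej (th : R) j := if type1 j then 0 else Num.max (f j - th) 0 - Num.max (g j - th) 0.

Lemma G1 th j : `|\sum_(i in Y j) (Num.max (f i - th) 0 - Num.max (g i - th) 0)| <= cum_err X (Y j).
Proof.
apply: (le_trans (ler_norm_sum _ _ _)); apply: ler_sum => i iY.
apply: (le_trans (maxdiff _ _ _)); rewrite /f (g_inv iY) /g.
exact: DS_lip.
Qed.

Definition sg th j := sig (a (lab j)) (v (lab j)) (cN j) th.

Lemma fE j i : ns j -> i \in Y j -> f i = phi (a (lab j)) (v (lab j)) (cN j) (tt i).
Proof.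
move=> h iY; rewrite /f (closest_ds (cN_in h) (cN_cl h iY)).
by rewrite (XtY iY).
Qed.
Lemma gE j : ns j -> g j = phi (a (lab j)) (v (lab j)) (cN j) (mu j).
Proof.
move=> h; rewrite /g (closest_ds (cN_in h) (cN_mean h)).
by rewrite meanE.
Qed.

Lemma G2 th j : ns j ->
  \sum_(i in Y j) (Num.max (f i - th) 0 - Num.max (g i - th) 0)
    <= cum_err X (Y j) * (sg th j (Rt j) - sg th j (Lt j)) / nrm (v (lab j)).
Proof.
move=> h.
set l := lab j; set c := cN j; set S := sg th j.
have e : forall i, i \in Y j -> Num.max (f i - th) 0 - Num.max (g i - th) 0
    = Fp (a l) (v l) c th (tt i) - Fp (a l) (v l) c th (mu j).
  by move=> i iY; rewrite (g_inv iY) (fE h iY) (gE h).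
rewrite (eq_bigr _ e).
apply: (@le_trans _ _ (\sum_(i in Y j) (S (tt i) - S (Lt j)) * (tt i - mu j))).
  have -> : \sum_(i in Y j) (S (tt i) - S (Lt j)) * (tt i - mu j)
     = \sum_(i in Y j) S (tt i) * (tt i - mu j) - S (Lt j) * \sum_(i in Y j) (tt i - mu j).
    by rewrite mulr_sumr -sumrB; apply: eq_bigr => i _; rewrite mulrBl.
  rewrite sum_dev mulr0 subr0; apply: ler_sum => i _; exact: PL.
have CE : cum_err X (Y j) = (\sum_(i in Y j) `|tt i - mu j|) * nrm (v l) by rewrite cum_errE mulr_suml.
have nv := nrmv l.
rewrite CE.
have -> : (\sum_(i in Y j) `|tt i - mu j|) * nrm (v l) * (S (Rt j) - S (Lt j)) / nrm (v l)
   = (\sum_(i in Y j) `|tt i - mu j|) * (S (Rt j) - S (Lt j)) by field; rewrite gt_eqF.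
rewrite mulr_suml.
apply: ler_sum => i iY.
have m1 : S (Lt j) <= S (tt i) by apply: sig_mono; apply: Lt_le.
have m2 : S (tt i) <= S (Rt j) by apply: sig_mono; apply: Rt_ge.
have h1 := ler_norm (tt i - mu j); have h2 := ler_norm (- (tt i - mu j)); rewrite normrN in h2.
have h3 : 0 <= `|tt i - mu j| by [].
rewrite mulrC; nra.
Qed.

Lemma G3 th j : ns j ->
  \sum_(i in Y j) (Num.max (g i - th) 0 - Num.max (f i - th) 0) <= 0.
Proof.
move=> h.
set l := lab j; set c := cN j; set S := sg th j.
have e : forall i, i \in Y j -> Num.max (g i - th) 0 - Num.max (f i - th) 0
    = Fp (a l) (v l) c th (mu j) - Fp (a l) (v l) c th (tt i).
  by move=> i iY; rewrite (g_inv iY) (fE h iY) (gE h).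
rewrite (eq_bigr _ e).
apply: (@le_trans _ _ (\sum_(i in Y j) S (mu j) * (mu j - tt i))).
  apply: ler_sum => i _; exact: PL.
rewrite -mulr_sumr.
have -> : \sum_(i in Y j) (mu j - tt i) = 0.
  have -> : \sum_(i in Y j) (mu j - tt i) = - \sum_(i in Y j) (tt i - mu j).
    by rewrite -sumrN; apply: eq_bigr => i _; rewrite opprB.
  by rewrite sum_dev oppr0.
by rewrite mulr0.
Qed.


Definition bndS j := if ~~ type1 j && ~~ ns j then tau (lab j) / #|Y j|%:R else 0.
Definition bndN th j := if ~~ type1 j && ns j then
  tau (lab j) / nrm (v (lab j)) * ((sg th j (Rt j) - sg th j (Lt j)) / #|Y j|%:R) else 0.

Lemma tau_ge0 l : 0 <= tau l.
Proof.
rewrite /tau; apply: mulr_ge0; last exact: ltW.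
apply: mulr_ge0; [exact: ltW | apply: divr_ge0; [|exact: ler0n]].
by case/andP: heps => /ltW.
Qed.

Lemma ell_ge0 : 0 <= ell.
Proof.
rewrite /ell; apply: mulr_ge0; last exact: ltW.
apply: mulr_ge0; [exact: ltW | apply: divr_ge0; [|exact: ler0n]].
by case/andP: heps => /ltW.
Qed.

Lemma bndS_ge0 j : 0 <= bndS j.
Proof. rewrite /bndS; case: ifP => // _; apply: divr_ge0; [exact: tau_ge0 | exact: ler0n]. Qed.

Lemma sg_mono th j x y : x <= y -> sg th j x <= sg th j y.
Proof. exact: sig_mono. Qed.

Lemma bndN_ge0 th j : 0 <= bndN th j.
Proof.
rewrite /bndN; case: ifP => // _; apply: mulr_ge0.
  by apply: divr_ge0; [exact: tau_ge0 | exact: nrm_ge0].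
apply: divr_ge0; last exact: ler0n.
by rewrite subr_ge0; apply: sg_mono; apply: LRt.
Qed.

Lemma sumEj th j : ~~ type1 j ->
  \sum_(i in Y j) Ej th i = \sum_(i in Y j) (Num.max (f i - th) 0 - Num.max (g i - th) 0).
Proof. by move=> T; apply: eq_bigr => i iY; rewrite /Ej (type1_inv iY) (negbTE T). Qed.

Lemma perj1 th j : #|Y j|%:R^-1 * \sum_(i in Y j) Ej th i <= bndS j + bndN th j.
Proof.
have N := YR0 j.
case T: (type1 j).
  rewrite big1 ?mulr0 ?addr_ge0 ?bndS_ge0 ?bndN_ge0 //.
  by move=> i iY; rewrite /Ej (type1_inv iY) T.
rewrite sumEj ?T // /bndS /bndN T /=.
have ct := type2 (negbT T).
case H: (ns j) => /=.
  rewrite add0r.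
  have := G2 th H; set D := sg th j (Rt j) - sg th j (Lt j) => h.
  have D0 : 0 <= D by rewrite subr_ge0; apply: sg_mono; apply: LRt.
  have nv := nrmv (lab j).
  have h2 : cum_err X (Y j) * D / nrm (v (lab j)) <= tau (lab j) * D / nrm (v (lab j)).
    by rewrite ler_pM2r ?invr_gt0 // ler_wpM2r.
  have := le_trans h h2 => h3.
  have -> : tau (lab j) / nrm (v (lab j)) * (D / #|Y j|%:R) = #|Y j|%:R^-1 * (tau (lab j) * D / nrm (v (lab j))).
    by field; rewrite !gt_eqF.
  by rewrite ler_pM2l ?invr_gt0.
rewrite addr0.
have := G1 th j => h.
have h2 := le_trans (ler_norm _) (le_trans h ct).
rewrite mulrC ler_pM2r ?invr_gt0 //.
Qed.

Lemma perj2 th j : #|Y j|%:R^-1 * \sum_(i in Y j) - Ej th i <= bndS j.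
Proof.
have N := YR0 j.
case T: (type1 j).
  rewrite big1 ?mulr0 ?bndS_ge0 //.
  by move=> i iY; rewrite /Ej (type1_inv iY) T oppr0.
rewrite sumrN sumEj ?T // /bndS T /=.
have ct := type2 (negbT T).
case H: (ns j) => /=.
  rewrite -sumrN (eq_bigr (fun i => Num.max (g i - th) 0 - Num.max (f i - th) 0)); last by move=> i _; rewrite opprB.
  by rewrite pmulr_rle0 ?invr_gt0 // G3.
have := G1 th j => h.
set S := \sum_(i in Y j) _ in h *.
have h0 : - S <= `|S| by rewrite -normrN ler_norm.
have h2 := le_trans h0 (le_trans h ct).
by rewrite mulrC ler_pM2r ?invr_gt0.
Qed.


Lemma regroup (H : 'I_n -> R) : \sum_j H j = \sum_j #|Y j|%:R^-1 * \sum_(i in Y j) H i.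
Proof.
rewrite [RHS](eq_bigr (fun j => \sum_i (if grp i == grp j then #|Y j|%:R^-1 * H i else 0))); last first.
  by move=> j _; rewrite mulr_sumr big_mkcond; apply: eq_bigr => i _; rewrite inY.
rewrite exchange_big /=; apply: eq_bigr => i _.
rewrite [RHS](eq_bigr (fun j => if j \in Y i then #|Y i|%:R^-1 * H i else 0)); last first.
  move=> j _; rewrite inY eq_sym; case: ifP => // e.
  by rewrite (YE (_ : j \in Y i)) // inY e.
rewrite [RHS](_ : _ = \sum_(i0 in Y i) #|Y i|%:R^-1 * H i); last by rewrite [RHS]big_mkcond; apply: eq_bigr => i0 _.
have N := YR0 i; rewrite sumr_const -mulr_natr; field; rewrite gt_eqF //.
Qed.

Lemma sep j1 j2 : grp j1 != grp j2 -> lab j1 = lab j2 -> Rt j1 <= Rt j2 -> Rt j1 < Lt j2.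
Proof.
move=> ne el le; rewrite ltNge; apply/negP => h.
apply: (hdisj (j := j1) (j' := j2)) => //; first by apply/eqP.
have [ir1 ir1Y er1] := Rt_ex j1.
have [il2 il2Y el2] := Lt_ex j2; have [ir2 ir2Y er2] := Rt_ex j2.
exists (X ir1); split.
  exists ir1, ir1; split => //; exists 0; first by rewrite lexx ler01.
  by rewrite subr0 scale1r scale0r addr0.
exists il2, ir2; split => //.
have LR := LRt j2.
have [l lb le'] : exists2 l : R, 0 <= l <= 1 & (1 - l) * Lt j2 + l * Rt j2 = Rt j1.
  case: (eqVneq (Rt j2) (Lt j2)) => e.
    exists 0; first by rewrite lexx ler01.
    rewrite e in le; lra.
  have RL : 0 < Rt j2 - Lt j2 by rewrite subr_gt0 lt_def e LR.
  exists ((Rt j1 - Lt j2) / (Rt j2 - Lt j2)).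
    apply/andP; split; first by apply: divr_ge0; lra.
    by rewrite ler_pdivrMr // mul1r; lra.
  by field; rewrite gt_eqF.
exists l => //.
rewrite (XtY ir1Y) (XtY il2Y) (XtY ir2Y) el conv_line -el2 -er2 le' -er1.
done.
Qed.

Lemma strad_half j1 j2 : lab j1 = lab j2 -> ~~ ns j2 -> grp j1 != grp j2 -> Rt j1 <= Rt j2 ->
  cR j1 = cR j2 -> False.
Proof.
move=> el n2 ne le ec.
have hsep := sep ne el le.
move/negP: n2; apply; apply/hasP; exists (cR j2); first exact: cR_in.
apply/forall_inP => i iY; apply/allP => c' c'C.
rewrite (XtY iY) !phiE.
apply: (@closer_between _ _ _ _ _ _ (Rt j1) (Rt j2)).
- exact: ltW (lt_le_trans hsep (Lt_le iY)).
- exact: Rt_ge iY.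
- by have /allP := cR_cl j1 => /(_ c' c'C); rewrite /PR el ec !phiE.
- by have /allP := cR_cl j2 => /(_ c' c'C); rewrite /PR !phiE.
Qed.

Lemma strad_inj j1 j2 : lab j1 = lab j2 -> ~~ ns j1 -> ~~ ns j2 -> cR j1 = cR j2 -> grp j1 = grp j2.
Proof.
move=> el n1 n2 ec; case: (eqVneq (grp j1) (grp j2)) => // ne; exfalso.
case/orP: (le_total (Rt j1) (Rt j2)) => h.
  exact: (strad_half el n2 ne h ec).
by apply: (strad_half (esym el) n1 _ h (esym ec)); rewrite eq_sym.
Qed.

Lemma part_C (J : pred 'I_n) (cf : 'I_n -> pt) (h : 'I_n -> R) : (forall j, J j -> cf j \in C) ->
  \sum_(j | J j) h j = \sum_(c <- C) \sum_(j | J j && (cf j == c)) h j.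
Proof.
move=> H.
rewrite [RHS](eq_bigr (fun c => \sum_(j | J j) (if cf j == c then h j else 0 : R))); last first.
  by move=> c _; rewrite big_mkcondr.
rewrite exchange_big /=; apply: eq_bigr => j Jj.
rewrite -big_mkcond /= big_const_seq iter_addr_0.
have -> : count (fun c => cf j == c) C = 1%N.
  by rewrite (eq_count (a2 := pred1 (cf j))) ?count_uniq_mem ?H // => c; rewrite /= eq_sym.
by [].
Qed.

Lemma count_groups (J : pred 'I_n) (cf : 'I_n -> pt) :
  (forall j, J j -> cf j \in C) ->
  (forall j1 j2, J j1 -> J j2 -> cf j1 = cf j2 -> grp j1 = grp j2) ->
  \sum_(j | J j) (#|Y j|%:R : R)^-1 <= k%:R.
Proof.
move=> Hin Hinj; rewrite (part_C _ Hin).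
apply: (@le_trans _ _ (\sum_(c <- C) (1 : R))); last first.
  by rewrite big_const_seq iter_addr_0 count_predT hsize.
apply: ler_sum => c _.
case: (pickP (fun j => J j && (cf j == c))) => [j0 /andP [J0 /eqP e0]|none]; last first.
  by rewrite big_pred0 // ler01.
have sub : forall j, J j && (cf j == c) -> j \in Y j0.
  move=> j /andP [Jj /eqP ej]; rewrite inY; apply/eqP; apply: Hinj => //.
  by rewrite ej e0.
rewrite (eq_bigr (fun _ => #|Y j0|%:R^-1)); last by move=> j P; rewrite (YE (sub j P)).
rewrite sumr_const.
have cle : (#|(fun j => J j && (cf j == c))| <= #|Y j0|)%N.
  by apply: subset_leq_card; apply/subsetP => j; rewrite unfold_in => /sub.
have e : forall (x : R) N, x *+ N = x * N%:R by move=> x N; rewrite mulr_natr.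
rewrite e mulrC ler_pdivrMr ?YR0 // mul1r ler_nat.
exact: cle.
Qed.


Lemma tele (S : R -> R) (Smono : forall x y, x <= y -> S x <= S y) :
  forall N (J : pred 'I_n), (#|J| <= N)%N ->
  (forall i j, J j -> grp i = grp j -> J i) ->
  (forall j1 j2, J j1 -> J j2 -> grp j1 != grp j2 -> Rt j1 <= Rt j2 -> Rt j1 < Lt j2) ->
  forall A B, A <= B -> (forall j, J j -> A <= Lt j /\ Rt j <= B) ->
  \sum_(j | J j) (S (Rt j) - S (Lt j)) / #|Y j|%:R <= S B - S A.
Proof.
move=> N; elim: N => [|N IH] J hN Jcl Jsep A B AB HAB;
  (case: (pickP J) => [j0 Jj0|none]; last by rewrite big_pred0 // subr_ge0 Smono).
  have : (0 < #|J|)%N by apply/card_gt0P; exists j0.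
  by rewrite lt0n -leqn0 hN.
case: (@arg_maxP _ _ _ j0 J Rt Jj0) => js Jjs Hmax.
rewrite (bigID (fun j => grp j == grp js)) /=.
have E1 : \sum_(j | J j && (grp j == grp js)) (S (Rt j) - S (Lt j)) / #|Y j|%:R = S (Rt js) - S (Lt js).
  rewrite (eq_bigl (fun j => j \in Y js)); last first.
    move=> j; rewrite inY; case e: (grp j == grp js); rewrite ?andbF ?andbT //.
    by apply: Jcl Jjs _; apply/eqP.
  rewrite (eq_bigr (fun _ => (S (Rt js) - S (Lt js)) / #|Y js|%:R)); last first.
    by move=> j jY; rewrite (Rt_inv jY) (Lt_inv jY) (YE jY).
  have e : forall (x : R) N, x *+ N = x * N%:R by move=> x N'; rewrite mulr_natr.
  have N0 := YR0 js.
  by rewrite sumr_const e; field; rewrite gt_eqF.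
pose J' := [pred j | J j && ~~ (grp j == grp js)].
have hN' : (#|J'| <= N)%N.
  have : (#|J'| < #|J|)%N.
    apply: proper_card; apply/properP; split.
      by apply/subsetP => j; rewrite !unfold_in /= => /andP [].
    by exists js; rewrite ?unfold_in //= eqxx andbF.
  by move=> h; rewrite -ltnS (leq_trans h hN).
have HA : A <= Lt js by case: (HAB js Jjs).
have HB : Rt js <= B by case: (HAB js Jjs).
have IH' : \sum_(j | J j && ~~ (grp j == grp js)) (S (Rt j) - S (Lt j)) / #|Y j|%:R <= S (Lt js) - S A.
  apply: (IH J' hN').
  - move=> i j /andP [Jj nj] e; rewrite /J' /= (Jcl i j Jj e) /=; by rewrite e.
  - by move=> j1 j2 /andP [J1 _] /andP [J2 _]; apply: Jsep.
  - exact: HA.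
  - move=> j /andP [Jj nj]; split; first by case: (HAB j Jj).
    by apply: ltW; apply: Jsep => //; apply: Hmax.
rewrite E1.
have := Smono _ _ HB; lra.
Qed.


Lemma sumS : \sum_j bndS j <= k%:R * \sum_(l < m) tau l.
Proof.
rewrite (partition_big lab xpredT) //= mulr_sumr; apply: ler_sum => l _.
rewrite (bigID (fun j => ~~ type1 j && ~~ ns j)) /=.
rewrite [X in _ + X]big1 ?addr0; last by move=> j /andP [_ h]; rewrite /bndS (negbTE h).
rewrite (eq_bigr (fun j => tau l * (#|Y j|%:R : R)^-1)); last first.
  by move=> j /andP [/eqP el h]; rewrite /bndS h el.
rewrite -mulr_sumr [_ * tau l]mulrC; apply: ler_wpM2l; first exact: tau_ge0.
apply: (@count_groups _ cR).
- by move=> j _; exact: cR_in.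
- move=> j1 j2 /andP [/eqP e1 /andP [_ n1]] /andP [/eqP e2 /andP [_ n2]] ec.
  by apply: strad_inj => //; rewrite e1 e2.
Qed.

Lemma sumN th : \sum_j bndN th j <= 2 * k%:R * \sum_(l < m) tau l.
Proof.
rewrite (partition_big lab xpredT) //= mulr_sumr; apply: ler_sum => l _.
rewrite (bigID (fun j => ~~ type1 j && ns j)) /=.
rewrite [X in _ + X]big1 ?addr0; last by move=> j /andP [_ h]; rewrite /bndN (negbTE h).
rewrite (@part_C _ cN); last by move=> j /andP [_ /andP [_ h]]; exact: cN_in.
apply: (@le_trans _ _ (\sum_(c <- C) 2 * tau l)); last first.
  rewrite big_const_seq iter_addr_0 count_predT hsize.
  have e : (2 * tau l) *+ k = 2 * k%:R * tau l by rewrite -mulr_natr; ring.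
  by rewrite e.
apply: ler_sum => c _.
set S := sig (a l) (v l) c th.
rewrite (eq_bigr (fun j => tau l / nrm (v l) * ((S (Rt j) - S (Lt j)) / #|Y j|%:R))); last first.
  move=> j /andP [/andP [/eqP el /andP [t1 n1]] /eqP ec].
  by rewrite /bndN t1 n1 /sg el ec.
rewrite -mulr_sumr.
set B := \sum_(i < n) `|tt i|.
have tb : forall i, `|tt i| <= B.
  move=> i; rewrite /B (bigD1 i) //= lerDl; apply: sumr_ge0 => j _; exact: normr_ge0.
have B0 : 0 <= B by apply: sumr_ge0 => j _; exact: normr_ge0.
have H : \sum_(j | (lab j == l) && (~~ type1 j && ns j) && (cN j == c))
           (S (Rt j) - S (Lt j)) / #|Y j|%:R <= S B - S (- B).
  apply: (@tele S (fun x y => @sig_mono _ _ _ _ _ th x y) _ _ (leqnn _)).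
  - move=> i j /andP [/andP [/eqP el /andP [t1 n1]] /eqP ec] e.
    have iY : i \in Y j by rewrite inY e.
    by rewrite (labY iY) (type1_inv iY) (ns_inv iY) (cN_inv iY) el ec t1 n1 !eqxx.
  - move=> j1 j2 /andP [/andP [/eqP e1 _] _] /andP [/andP [/eqP e2 _] _] ne le.
    by apply: sep => //; rewrite e1 e2.
  - lra.
  - move=> j _; split.
      have [i _ ->] := Lt_ex j; have := tb i; rewrite ler_norml; lra.
    have [i _ ->] := Rt_ex j; have := tb i; rewrite ler_norml; lra.
have nv := nrmv l.
have hb1 := sig_bound (a l) (v l) c th B; have hb2 := sig_bound (a l) (v l) c th (- B).
have : S B - S (- B) <= 2 * nrm (v l).
  move: hb1 hb2; rewrite -/S !ler_norml; lra.
move=> h2.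
have tl := tau_ge0 l.
have h3 : tau l / nrm (v l) * (\sum_(j | (lab j == l) && (~~ type1 j && ns j) && (cN j == c))
           (S (Rt j) - S (Lt j)) / #|Y j|%:R) <= tau l / nrm (v l) * (2 * nrm (v l)).
  apply: ler_wpM2l; first by apply: divr_ge0; [|exact: ltW].
  exact: le_trans H h2.
apply: (le_trans h3).
have e : tau l / nrm (v l) * (2 * nrm (v l)) = 2 * tau l by field; rewrite gt_eqF.
by rewrite e.
Qed.


Lemma ksum : k%:R * \sum_(l < m) tau l = alpha * eps * \sum_(l < m) t l.
Proof.
rewrite /tau -mulr_sumr.
have k0' : (k%:R : R) != 0 by rewrite pnatr_eq0 -lt0n.
field; done.
Qed.

Lemma main_bound :
  `| cost p [seq mean X [set i | grp i == grp j] | j <- enum 'I_n] C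
       - cost p [seq X j | j <- enum 'I_n] C |
      <= 3 * alpha * eps * (s + \sum_(i < m) t i).
Proof.
have pn : (p <= n)%N by case/andP: hp.
have p0 : (0 < p)%N by case/andP: hp.
have -> : cost p [seq mean X [set i | grp i == grp j] | j <- enum 'I_n] C = TS p g.
  by rewrite /cost /TS -map_comp.
have -> : cost p [seq X j | j <- enum 'I_n] C = TS p f.
  by rewrite /cost /TS -map_comp.
pose w := fun j => if type1 j then g j else f j.
have hA : `|TS p w - TS p f| <= p%:R * ell.
  apply: TS_lip => // j; rewrite /w; case: ifP => T; last by rewrite subrr normr0 ell_ge0.
  rewrite /g /f; apply: (le_trans (DS_lip _ _ C)).
  rewrite edistC meanE (XtY (jY j)) line_dist.
  have [m1 m2] := mu_bounds j.
  have h1 := Lt_le (jY j); have h2 := Rt_ge (jY j).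
  apply: (le_trans _ (le_trans (seg_len_ge j) T)).
  apply: ler_wpM2r; first exact: nrm_ge0.
  rewrite ler_norml; apply/andP; split; lra.
have pell : p%:R * ell = alpha * eps * s.
  rewrite /ell; field; by rewrite pnatr_eq0 -lt0n.
have Ew : forall th j, Num.max (w j - th) 0 - Num.max (g j - th) 0 = Ej th j.
  by move=> th j; rewrite /w /Ej; case: ifP => _; rewrite ?subrr.
have hB1 : TS p w - TS p g <= 3 * (alpha * eps * \sum_(l < m) t l).
  have [th eg] := P1b pn g p0.
  have h := P1a pn w th.
  have h' : TS p w - TS p g <= \sum_j Ej th j.
    rewrite eg -(eq_bigr _ (fun j _ => Ew th j)) sumrB; lra.
  apply: (le_trans h'); rewrite regroup.
  apply: (le_trans (ler_sum _ (fun j _ => perj1 th j))).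
  rewrite big_split /=.
  have := sumS; have := sumN th; rewrite -ksum; lra.
have hB2 : TS p g - TS p w <= alpha * eps * \sum_(l < m) t l.
  have [th ew] := P1b pn w p0.
  have h := P1a pn g th.
  have h' : TS p g - TS p w <= \sum_j - Ej th j.
    have -> : \sum_j - Ej th j = \sum_j Num.max (g j - th) 0 - \sum_j Num.max (w j - th) 0.
      by rewrite -sumrB; apply: eq_bigr => j _; rewrite -Ew opprB.
    rewrite ew; lra.
  apply: (le_trans h'); rewrite regroup.
  apply: (le_trans (ler_sum _ (fun j _ => perj2 th j))).
  by rewrite -ksum; exact: sumS.
have hB : `|TS p g - TS p w| <= 3 * (alpha * eps * \sum_(l < m) t l).
  have : 0 <= alpha * eps * \sum_(l < m) t l.
    rewrite -ksum; apply: mulr_ge0; [exact: ler0n | apply: sumr_ge0 => l _; exact: tau_ge0].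
  rewrite ler_norml; move=> h0; apply/andP; split; lra.
have hs0 : 0 <= alpha * eps * s.
  rewrite -pell; apply: mulr_ge0; [exact: ler0n | exact: ell_ge0].
have tri : `|TS p g - TS p f| <= `|TS p g - TS p w| + `|TS p w - TS p f|.
  by rewrite (_ : TS p g - TS p f = (TS p g - TS p w) + (TS p w - TS p f)) ?ler_normD // addrA subrK.
have e3 : 3 * alpha * eps * (s + \sum_(i < m) t i) = 3 * (alpha * eps * s) + 3 * (alpha * eps * \sum_(l < m) t l).
  by ring.
rewrite e3; move: tri hA hB; rewrite pell; lra.
Qed.

End Main.

End Aux.

Theorem lemma4p1 (R : realType) (alpha : R) (halpha : 0 < alpha) :
  exists2 beta : R, 0 < beta &
  forall (d : nat) (k : nat) (eps : R) (n : nat) (X : 'I_n -> 'rV[R]_d) (p : nat)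
    (m : nat) (a v : 'I_m -> 'rV[R]_d) (s : R) (t : 'I_m -> R)
    (lab : 'I_n -> 'I_m) (grp : 'I_n -> nat) (C : seq 'rV[R]_d),
    (0 < k)%N -> 0 < eps < 1 ->
    injective X ->
    (0 < p <= n)%N ->
    (* L is a finite collection of (distinct) lines l_i = {a i + r v i} *)
    (forall i, v i != 0) ->
    (forall i i', i != i' ->
       ~ (forall z, on_line (a i) (v i) z <-> on_line (a i') (v i') z)) ->
    0 < s -> (forall i, 0 < t i) ->
    (* (i) X is partitioned into X_l := {x_j | lab j = l}, with X_l in l *)
    (forall j, on_line (a (lab j)) (v (lab j)) (X j)) ->
    (* (ii) each X_l is partitioned into the groups Y_g := {x_j | grp j = g} *)
    (forall j j', grp j = grp j' -> lab j = lab j') ->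
    (* the segments I(Y) of distinct groups on a same line are disjoint *)
    (forall j j', grp j <> grp j' -> lab j = lab j' ->
       ~ (exists z, in_hull X [set i | grp i == grp j] z /\
                    in_hull X [set i | grp i == grp j'] z)) ->
    (forall j, seg_len X [set i | grp i == grp j] <= alpha * (eps / p%:R) * s
            \/ cum_err X [set i | grp i == grp j] <= alpha * (eps / k%:R) * t (lab j)) ->
    (* C is a set of k centers *)
    uniq C -> size C = k ->
    `| cost p [seq mean X [set i | grp i == grp j] | j <- enum 'I_n] C
       - cost p [seq X j | j <- enum 'I_n] C |
      <= beta * eps * (s + \sum_(i < m) t i).
Proof.
exists (3 * alpha); first by rewrite mulr_gt0.
move=> d k eps n X p m a v s t lab grp C k0 heps Xinj hp hv hlines hs ht hline hgrp hdisj htype huniq hsize.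
exact: (Aux.main_bound halpha k0 heps hp hv hs ht hline hgrp hdisj htype huniq hsize).
Qed.
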